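(* Let $d\ge 1$, $N\ge 1$, $L\ge 0$ be integers and let $\epsilon>0$, $\alpha>0$, $\sigma>0$, $c\ge 0$ be real numbers. Fix a state $s$ and let $R(s,\cdot):\mathbb{R}^d\to\mathbb{R}$ be differentiable and $c$-Lipschitz with respect to the Euclidean norm, so that $\|\nabla_a R(s,a)\|_2\le c$ for all $a\in\mathbb{R}^d$. Let $k(x,y)=\exp\!\big(-\|x-y\|_2^2/(2\sigma^2)\big)$ be the Gaussian (RBF) kernel on $\mathbb{R}^d$. Let $a_1^{(0)},\dots,a_N^{(0)}\in\mathbb{R}^d$ be arbitrary initial particles (e.g. samples from a reference policy $\mu(\cdot\mid s)$), and define iteratively, for $l=0,1,\dots,L-1$ and $i=1,\dots,N$, $$a_i^{(l+1)} = a_i^{(l)} + \epsilon\,\phi_l\big(a_i^{(l)}\big),\qquad \phi_l(x)=\frac1N\sum_{j=1}^N\Big[k\big(a_j^{(l)},x\big)\,\frac{\nabla_a R\big(s,a_j^{(l)}\big)}{\alpha}+\nabla_{a_j}k\big(a_j^{(l)},x\big)\Big],$$ where $\nabla_{a_j}k(a_j,x)$ denotes the gradient of $k$ with respect to its first argument evaluated at $a_j=a_j^{(l)}$. Let $\pi_N^0=\frac1N\sum_{i=1}^N\delta_{a_i^{(0)}}$ and $\pi_N^L=\frac1N\sum_{i=1}^N\delta_{a_i^{(L)}}$. Then $$\mathrm{MMD}^2\big(\pi_N^0,\pi_N^L\big)\le \frac{2\epsilon L}{\sigma\sqrt e}\left(\frac{c}{\alpha}+\frac{1}{\sigma\sqrt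 e}\right).$$
   Context: For probability measures $P,Q$ on $\mathbb{R}^d$, the squared maximum mean discrepancy with kernel $k$ is $\mathrm{MMD}^2(P,Q)=\mathbb{E}_{x,x'\sim P}k(x,x')+\mathbb{E}_{y,y'\sim Q}k(y,y')-2\,\mathbb{E}_{x\sim P,y\sim Q}k(x,y)$ (with independent draws). For the empirical measures above this equals $\frac{1}{N^2}\sum_{i,j=1}^N\big[k(a_i^{(0)},a_j^{(0)})+k(a_i^{(L)},a_j^{(L)})-2k(a_i^{(0)},a_j^{(L)})\big]$. The kernel bandwidth $\sigma$ is a fixed constant (the same in every iteration). In the paper, $\pi_N^0$ is identified with the reference distribution $\mu$, and $\pi_N^L$ is the ''implicit policy'' obtained by running $L$ steps of the particle update (Value Gradient Flow). *)

(* Defs.v *)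
From mathcomp Require Import all_boot all_order all_algebra.
From mathcomp Require Import all_classical all_reals all_analysis.
Set Implicit Arguments. Unset Strict Implicit. Unset Printing Implicit Defensive.
Import Order.TTheory GRing.Theory Num.Theory.
Import numFieldNormedType.Exports.
Local Open Scope ring_scope.

Section Defs.
Variable R : realType.
Variable d : nat.

Definition enorm (v : 'rV[R]_d) : R := Num.sqrt (\sum_(i < d) (v 0 i) ^+ 2).

Definition rbf (sigma : R) (x y : 'rV[R]_d) : R :=
  expR (- (enorm (x - y)) ^+ 2 / (2 * sigma ^+ 2)).

Definition grad (f : 'rV[R]_d -> R) (a : 'rV[R]_d) : 'rV[R]_d :=
  \row_(i < d) ('D_(delta_mx 0 i) f a).

Definition phi (N : nat) (Rs : 'rV[R]_d -> R) (alpha sigma : R)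
  (p : 'I_N -> 'rV[R]_d) (x : 'rV[R]_d) : 'rV[R]_d :=
  N%:R^-1 *: \sum_(j < N)
     ((rbf sigma (p j) x / alpha) *: grad Rs (p j)
      + grad (fun y => rbf sigma y x) (p j)).

Fixpoint particles (N : nat) (Rs : 'rV[R]_d -> R) (alpha sigma eps : R)
  (a0 : 'I_N -> 'rV[R]_d) (l : nat) : 'I_N -> 'rV[R]_d :=
  match l with
  | 0%N => a0
  | l'.+1 => let p := particles Rs alpha sigma eps a0 l' in
             fun i => p i + eps *: phi Rs alpha sigma p (p i)
  end.

(* squared MMD between empirical measures (1/N) sum delta_{p i}, (1/N) sum delta_{q i} *)
Definition MMD2 (N : nat) (sigma : R) (p q : 'I_N -> 'rV[R]_d) : R :=
  (N%:R ^+ 2)^-1 * \sum_(i < N) \sum_(j < N)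
     (rbf sigma (p i) (p j) + rbf sigma (q i) (q j) - 2 * rbf sigma (p i) (q j)).

End Defs.

(* Main.v *)
Require Import Defs.
From mathcomp Require Import all_boot all_order all_algebra.
From mathcomp Require Import all_classical all_reals all_analysis.
From mathcomp Require Import ring lra.
Import Order.TTheory GRing.Theory Num.Theory.
Import numFieldNormedType.Exports.
Local Open Scope ring_scope.
Set Implicit Arguments. Unset Strict Implicit.

Lemma sumsq_ge0 (R : realType) (d : nat) (v : 'rV[R]_d) : 0 <= \sum_(i < d) (v 0 i) ^+ 2.
Proof. by apply: sumr_ge0 => i _; exact: sqr_ge0. Qed.

Lemma enorm_ge0 (R : realType) (d : nat) (v : 'rV[R]_d) : 0 <= enorm v.
Proof. exact: sqrtr_ge0. Qed.

Lemma enorm_sq (R : realType) (d : nat) (v : 'rV[R]_d) :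
  enorm v ^+ 2 = \sum_(i < d) (v 0 i) ^+ 2.
Proof. by rewrite /enorm sqr_sqrtr // sumsq_ge0. Qed.

Lemma enormZ (R : realType) (d : nat) (a : R) (v : 'rV[R]_d) :
  enorm (a *: v) = `|a| * enorm v.
Proof.
rewrite /enorm (eq_bigr (fun i => a ^+ 2 * (v 0 i) ^+ 2)); last first.
  by move=> i _; rewrite mxE exprMn.
by rewrite -mulr_sumr sqrtrM ?sqr_ge0 // sqrtr_sqr.
Qed.

Lemma enormN (R : realType) (d : nat) (v : 'rV[R]_d) : enorm (- v) = enorm v.
Proof. by rewrite -scaleN1r enormZ normrN normr1 mul1r. Qed.

Lemma enormB (R : realType) (d : nat) (u v : 'rV[R]_d) : enorm (u - v) = enorm (v - u).
Proof. by rewrite -enormN opprB. Qed.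

Lemma enorm0 (R : realType) (d : nat) : enorm (0 : 'rV[R]_d) = 0.
Proof. by rewrite -(scale0r (0 : 'rV[R]_d)) enormZ normr0 mul0r. Qed.

Lemma sumsq_lin (R : realType) (d : nat) (al be : R) (a b : 'I_d -> R) :
  \sum_(k < d) (al * a k + be * b k) ^+ 2 =
  al ^+ 2 * \sum_(k < d) a k ^+ 2 + 2 * al * be * \sum_(k < d) a k * b k
  + be ^+ 2 * \sum_(k < d) b k ^+ 2.
Proof.
rewrite !mulr_sumr -!big_split /=; apply: eq_bigr => k _; ring.
Qed.

Lemma CS (R : realType) (d : nat) (a b : 'I_d -> R) :
  (\sum_(k < d) a k * b k) ^+ 2 <= (\sum_(k < d) a k ^+ 2) * (\sum_(k < d) b k ^+ 2).
Proof.
set U := \sum_(k < d) a k ^+ 2; set V := \sum_(k < d) b k ^+ 2.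
set P := \sum_(k < d) a k * b k.
have U0 : 0 <= U by apply: sumr_ge0 => k _; exact: sqr_ge0.
have := sumsq_lin (- P) U a b; rewrite -/U -/V -/P => E.
have H : 0 <= U * (U * V - P ^+ 2).
  have : 0 <= \sum_(k < d) (- P * a k + U * b k) ^+ 2.
    by apply: sumr_ge0 => k _; exact: sqr_ge0.
  rewrite E. move=> H; suff -> : U * (U * V - P ^+ 2) =
     (- P) ^+ 2 * U + 2 * - P * U * P + U ^+ 2 * V by [].
  ring.
have [Ug|Ue] := ltP 0 U.
  by rewrite -subr_ge0; rewrite pmulr_rge0 in H.
have U00 : U = 0 by apply/eqP; rewrite eq_le Ue U0.
have ha : forall k, a k = 0.
  move=> k; have h := @psumr_eq0P R 'I_d predT (fun k => a k ^+ 2) (fun i _ => sqr_ge0 (a i)) U00.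
  by apply/eqP; rewrite -sqrf_eq0; apply/eqP; apply: h.
rewrite /P big1 ?expr0n ?mulr_ge0 //= ?U0 ?sumr_ge0 // => k _.
  exact: sqr_ge0.
by rewrite ha mul0r.
Qed.

Lemma enormD (R : realType) (d : nat) (u v : 'rV[R]_d) :
  enorm (u + v) <= enorm u + enorm v.
Proof.
rewrite -ler_sqr ?nnegrE ?addr_ge0 ?enorm_ge0 //.
rewrite enorm_sq (eq_bigr (fun k => (1 * u 0 k + 1 * v 0 k) ^+ 2)); last first.
  by move=> k _; rewrite mxE !mul1r.
rewrite sumsq_lin !expr1n !mul1r !mulr1 sqrrD -!enorm_sq.
rewrite lerD2r lerD2l.
set P := \sum_(k < d) u 0 k * v 0 k.
suff : P <= enorm u * enorm v by move=> h; rewrite -mulr_natl; lra. idtac.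
apply: (le_trans (ler_norm P)).
rewrite -(sqrtr_sqr P) -(ger0_norm (mulr_ge0 (enorm_ge0 u) (enorm_ge0 v))) -(sqrtr_sqr (enorm u * enorm v)) ler_sqrt ?sqr_ge0 //.
by rewrite exprMn !enorm_sq; exact: CS.
Qed.

Lemma enorm_rev (R : realType) (d : nat) (u w : 'rV[R]_d) :
  `|enorm u - enorm w| <= enorm (u - w).
Proof.
have h1 := enormD (u - w) w; rewrite subrK in h1.
have h2 := enormD (w - u) u; rewrite subrK enormB in h2.
rewrite ler_norml; apply/andP; split; lra.
Qed.

Lemma enorm_sum (R : realType) (d N : nat) (F : 'I_N -> 'rV[R]_d) :
  enorm (\sum_(j < N) F j) <= \sum_(j < N) enorm (F j).
Proof.
elim/big_rec2: _ => [|j y1 y2 _ IH]; first by rewrite enorm0.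
by apply: (le_trans (enormD _ _)); rewrite lerD2l.
Qed.

Definition hk (R : realType) (s t : R) := expR (- t ^+ 2 / (2 * s ^+ 2)).
Definition kap (R : realType) (s : R) := 1 / (s * Num.sqrt (expR 1)).

Lemma kap_ge0 (R : realType) (s : R) : 0 < s -> 0 <= kap s.
Proof. move=> s0; rewrite /kap divr_ge0 // mulr_ge0 ?ltW ?sqrtr_ge0 //. Qed.

Lemma KB (R : realType) (s t : R) : 0 < s -> `|hk s t * (t / s ^+ 2)| <= kap s.
Proof.
move=> s0.
rewrite -sqrtr_sqr -(ger0_norm (kap_ge0 s0)) -(sqrtr_sqr (kap s)) ler_sqrt ?sqr_ge0 //.
set u := t ^+ 2 / s ^+ 2.
have s2 : 0 < s ^+ 2 by rewrite exprn_gt0.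
have e1 : (hk s t * (t / s ^+ 2)) ^+ 2 = (expR (- u) * u) / s ^+ 2.
  rewrite /hk exprMn expr2 -expRD.
  have -> : - t ^+ 2 / (2 * s ^+ 2) + - t ^+ 2 / (2 * s ^+ 2) = - u.
    rewrite /u; field; rewrite gt_eqF //.
  rewrite /u; field; rewrite gt_eqF //.
have e2 : kap s ^+ 2 = expR (-1) / s ^+ 2.
  rewrite /kap expRN mul1r exprVn exprMn sqr_sqrtr ?expR_ge0 //; field.
  by rewrite gt_eqF ?expR_gt0 // gt_eqF.
rewrite e1 e2 ler_pM2r ?invr_gt0 //.
have h := expR_ge1Dx (u - 1).
have hu : u <= expR u * expR (-1) by rewrite -expRD; lra.
have hp := expR_gt0 (- u).
have : expR (- u) * u <= expR (- u) * (expR u * expR (-1)) by rewrite ler_pM2l.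
by rewrite mulrA -expRD addNr expR0 mul1r.
Qed.

Lemma quad_derive (R : realType) (A B C t : R) :
  is_derive t 1 (fun t => A + B * t + C * t ^+ 2) (B + 2 * C * t).
Proof.
have h1 : is_derive t (1:R) (fun t : R => B * t) B.
  have := @is_deriveZ _ _ _ id B t 1 1 (is_derive_id t 1).
  by rewrite /GRing.scale /= mulr1.
have h2 : is_derive t (1:R) (fun t : R => C * t ^+ 2) (2 * C * t).
  have := @is_deriveZ _ _ _ (fun t : R => t ^+ 2) C t 1 _ (is_deriveX 2 (is_derive_id t 1)).
  move=> H. apply: (is_derive_eq H).
  by rewrite /GRing.scale /= expr1 mulr1 mulrCA mulrA.
have := is_deriveD (is_deriveD (is_derive_cst A t 1) h1) h2.
by rewrite add0r.
Qed.

Lemma expquad_derive (R : realType) (A B C t : R) :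
  is_derive t 1 (fun t => expR (A + B * t + C * t ^+ 2))
    (expR (A + B * t + C * t ^+ 2) * (B + 2 * C * t)).
Proof.
have H := is_derive1_comp (is_derive_expR _) (quad_derive A B C t). exact: H.
Qed.

Lemma hk_eq (R : realType) (s : R) : 0 < s ->
  hk s = (fun t => expR (0 + 0 * t + (- 1 / (2 * s ^+ 2)) * t ^+ 2)).
Proof.
move=> s0; apply/funext => t; rewrite /hk; congr expR.
by field; rewrite gt_eqF // exprn_gt0.
Qed.

Lemma hk_derive (R : realType) (s t : R) : 0 < s ->
  is_derive t 1 (hk s) (hk s t * (- (t / s ^+ 2))).
Proof.
move=> s0; rewrite hk_eq //; have H := expquad_derive 0 0 (- 1 / (2 * s ^+ 2)) t; apply: (is_derive_eq H).
congr (_ * _); field; rewrite gt_eqF // exprn_gt0.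
Qed.

Lemma hk_lip (R : realType) (s a b : R) : 0 < s ->
  `|hk s a - hk s b| <= kap s * `|a - b|.
Proof.
move=> s0.
wlog ab : a b / a <= b.
  move=> W; have [/W //|/ltW ba] := leP a b.
  by rewrite distrC (distrC a); apply: W.
have cont : continuous (hk s).
  move=> r.
  apply/differentiable_continuous/derivable1_diffP.
  by have [] := hk_derive r s0.
have [c _ E] := @MVT_segment R (hk s) (fun t => hk s t * (- (t / s ^+ 2))) a b ab
  (fun x _ => hk_derive x s0) (continuous_subspaceT cont).
rewrite distrC E normrM (distrC a b) ler_wpM2r //.
by rewrite mulrN normrN; exact: KB.
Qed.

Lemma D_bound (R : realType) (d : nat) (f : 'rV[R]_d -> R) (a v : 'rV[R]_d) (M : R) :
  derivable f a v ->
  (forall h : R, h != 0 -> `|h^-1 *: ((f \o shift a) (h *: v) - f a)| <= M) ->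
  `|'D_v f a| <= M.
Proof.
move=> df Hb; rewrite /derive.
apply: (cvgr_to_le (cvg_norm df)).
near=> h; apply: Hb; near: h; exact: nbhs_dnbhs_neq.
Unshelve. all: by end_near.
Qed.

Lemma DRs_bound (R : realType) (d : nat) (Rs : 'rV[R]_d -> R) (c : R) (a v : 'rV[R]_d) :
  (forall a : 'rV[R]_d, differentiable Rs a) ->
  (forall a b : 'rV[R]_d, `|Rs a - Rs b| <= c * enorm (a - b)) ->
  `|'D_v Rs a| <= c * enorm v.
Proof.
move=> dR lip; apply: D_bound; first exact: diff_derivable.
move=> h h0 /=; rewrite normrM.
have := lip (h *: v + a) a; rewrite addrK enormZ => H.
rewrite normfV ler_pdivrMl ?normr_gt0 //.
by rewrite mulrCA.
Qed.

Lemma grad_Rs_bound (R : realType) (d : nat) (Rs : 'rV[R]_d -> R) (c : R) (a : 'rV[R]_d) :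
  0 <= c ->
  (forall a : 'rV[R]_d, differentiable Rs a) ->
  (forall a b : 'rV[R]_d, `|Rs a - Rs b| <= c * enorm (a - b)) ->
  enorm (grad Rs a) <= c.
Proof.
move=> c0 dR lip; set g := grad Rs a.
have E : 'D_g Rs a = enorm g ^+ 2.
  rewrite deriveE // enorm_sq.
  have -> : 'd Rs a g = 'd Rs a (\sum_(j < d) g 0 j *: delta_mx 0 j).
    by rewrite -row_sum_delta.
  rewrite linear_sum; apply: eq_bigr => j _.
  by rewrite linearZ /= -deriveE // /g mxE expr2.
have := DRs_bound a g dR lip; rewrite E ger0_norm ?sqr_ge0 // expr2.
have [e0|ep] := eqVneq (enorm g) 0; first by rewrite e0.
have ep' : 0 < enorm g by rewrite lt_def ep enorm_ge0.
by rewrite ler_pM2r.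
Qed.

Lemma derive_line (R : realType) (d : nat) (f : 'rV[R]_d -> R) (p v : 'rV[R]_d) :
  'D_v f p = 'D_1 (fun h : R => f (h *: v + p)) 0.
Proof.
rewrite /derive; congr lim; f_equal; apply/funext => h /=.
by rewrite addr0 scale0r add0r [_%:A]mulr1.
Qed.

Lemma sum_line (R : realType) (d : nat) (i : 'I_d) (h : R) (w : 'rV[R]_d) :
  \sum_(k < d) ((h *: delta_mx 0 i + w) 0 k) ^+ 2 =
  \sum_(k < d) (w 0 k) ^+ 2 + 2 * w 0 i * h + h ^+ 2.
Proof.
rewrite (eq_bigr (fun k => (w 0 k) ^+ 2 + (i == k)%:R * (2 * w 0 k * h + h ^+ 2))); last first.
  move=> k _; rewrite !mxE /= (eq_sym k i); case: (i == k) => /=; ring.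
rewrite big_split /= -addrA; congr (_ + _).
rewrite (bigD1 i) //= eqxx mul1r big1 ?addr0 // => k ki.
by rewrite eq_sym (negbTE ki) mul0r.
Qed.

Lemma grad_rbf (R : realType) (d : nat) (s : R) (x p : 'rV[R]_d) : 0 < s ->
  grad (fun y => rbf s y x) p = (hk s (enorm (p - x)) * (- (1 / s ^+ 2))) *: (p - x).
Proof.
move=> s0; apply/rowP => i; rewrite !mxE derive_line.
set w := p - x.
have s2 : s ^+ 2 != 0 by rewrite gt_eqF // exprn_gt0.
set S := \sum_(k < d) (w 0 k) ^+ 2.
have -> : (fun h : R => rbf s (h *: delta_mx 0 i + p) x) =
  (fun h => expR (- S / (2 * s ^+ 2) + (- (2 * w 0 i) / (2 * s ^+ 2)) * h
                  + (- 1 / (2 * s ^+ 2)) * h ^+ 2)).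
  apply/funext => h; rewrite /rbf -addrA -/w enorm_sq sum_line -/S; congr expR.
  by field; rewrite gt_eqF.
have [_ ->] := expquad_derive (- S / (2 * s ^+ 2)) (- (2 * w 0 i) / (2 * s ^+ 2))
   (- 1 / (2 * s ^+ 2)) 0.
rewrite /hk enorm_sq -/S.
rewrite mulr0 expr0n /= mulr0 !addr0.
rewrite /w !mxE; by field; rewrite gt_eqF.
Qed.

Lemma grad_rbf_bound (R : realType) (d : nat) (s : R) (x p : 'rV[R]_d) : 0 < s ->
  enorm (grad (fun y => rbf s y x) p) <= kap s.
Proof.
move=> s0; rewrite grad_rbf // enormZ.
rewrite -[X in _ * X](ger0_norm (enorm_ge0 (p - x))) -normrM.
set r := enorm (p - x). have -> : hk s r * - (1 / s ^+ 2) * r = - (hk s r * (r / s ^+ 2)) by ring. by rewrite normrN; exact: KB.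
Qed.

Lemma rbf_ge0 (R : realType) (d : nat) (s : R) (x y : 'rV[R]_d) : 0 <= rbf s x y.
Proof. exact: expR_ge0. Qed.

Lemma rbf_le1 (R : realType) (d : nat) (s : R) (x y : 'rV[R]_d) : rbf s x y <= 1.
Proof.
rewrite /rbf expR_le1 mulNr oppr_le0 divr_ge0 ?sqr_ge0 //.
by rewrite mulr_ge0 ?sqr_ge0.
Qed.

Lemma phi_bound (R : realType) (d N : nat) (Rs : 'rV[R]_d -> R) (alpha s c : R)
  (p : 'I_N -> 'rV[R]_d) (z : 'rV[R]_d) :
  (1 <= N)%N -> 0 < alpha -> 0 < s -> 0 <= c ->
  (forall a, enorm (grad Rs a) <= c) ->
  enorm (phi Rs alpha s p z) <= c / alpha + kap s.
Proof.
move=> N1 a0 s0 c0 gb; rewrite /phi enormZ.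
have Np : 0 < N%:R :> R by rewrite ltr0n.
rewrite normfV normr_nat ler_pdivrMl //.
apply: (le_trans (enorm_sum _)).
have -> : N%:R * (c / alpha + kap s) = \sum_(j < N) (c / alpha + kap s).
  by rewrite sumr_const card_ord mulr_natl.
apply: ler_sum => j _.
apply: (le_trans (enormD _ _)); apply: lerD; last exact: grad_rbf_bound.
have a0' := ltW a0.
rewrite enormZ ger0_norm ?divr_ge0 ?rbf_ge0 //.
rewrite mulrAC ler_wpM2r ?invr_ge0 //.
apply: (le_trans (ler_wpM2r (enorm_ge0 _) (rbf_le1 s (p j) z))).
by rewrite mul1r gb.
Qed.

Lemma particles_bound (R : realType) (d N : nat) (Rs : 'rV[R]_d -> R) (alpha s eps M : R)
  (a0 : 'I_N -> 'rV[R]_d) :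
  0 <= eps ->
  (forall (p : 'I_N -> 'rV[R]_d) z, enorm (phi Rs alpha s p z) <= M) ->
  forall l i, enorm (particles Rs alpha s eps a0 l i - a0 i) <= eps * l%:R * M.
Proof.
move=> e0 pb; elim=> [|l IH] i /=.
  by rewrite subrr enorm0 mulr0 mul0r.
rewrite addrAC.
apply: (le_trans (enormD _ _)).
rewrite enormZ ger0_norm //.
have h1 := IH i.
have h2 := ler_wpM2l e0 (pb (particles Rs alpha s eps a0 l) (particles Rs alpha s eps a0 l i)).
have -> : eps * l.+1%:R * M = eps * l%:R * M + eps * M by rewrite -natr1; ring.
by apply: lerD.
Qed.

Lemma rbf_lip2 (R : realType) (d : nat) (s : R) (x1 y1 x2 y2 : 'rV[R]_d) : 0 < s ->
  `|rbf s x1 y1 - rbf s x2 y2| <= kap s * enorm ((x1 - y1) - (x2 - y2)).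
Proof.
move=> s0; apply: (le_trans (hk_lip _ _ s0)).
by rewrite ler_wpM2l ?kap_ge0 // enorm_rev.
Qed.

Unset Implicit Arguments. Set Strict Implicit.

Theorem theorem1 (R : realType) (d N L : nat) (eps alpha sigma c : R)
  (Rs : 'rV[R]_d -> R) (a0 : 'I_N -> 'rV[R]_d) :
  (1 <= d)%N -> (1 <= N)%N ->
  0 < eps -> 0 < alpha -> 0 < sigma -> 0 <= c ->
  (forall a : 'rV[R]_d, differentiable Rs a) ->
  (forall a b : 'rV[R]_d, `|Rs a - Rs b| <= c * enorm (a - b)) ->
  MMD2 sigma a0 (particles Rs alpha sigma eps a0 L) <=
    2 * eps * L%:R / (sigma * Num.sqrt (expR 1)) *
    (c / alpha + 1 / (sigma * Num.sqrt (expR 1))).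
Proof.
move=> d1 N1 e0 al0 s0 c0 dR lip.
set b := particles Rs alpha sigma eps a0 L.
set M := c / alpha + kap sigma.
have gb : forall a, enorm (grad Rs a) <= c.
  by move=> a; apply: grad_Rs_bound.
have pb : forall i, enorm (b i - a0 i) <= eps * L%:R * M.
  move=> i; apply: particles_bound; first exact: ltW.
  by move=> p z; apply: phi_bound.
set B := 2 * (kap sigma * (eps * L%:R * M)).
have T : forall i j, rbf sigma (a0 i) (a0 j) + rbf sigma (b i) (b j)
            - 2 * rbf sigma (a0 i) (b j) <= B.
  move=> i j.
  have h1 := rbf_lip2 (a0 i) (a0 j) (a0 i) (b j) s0.
  have h2 := rbf_lip2 (b i) (b j) (a0 i) (b j) s0.
  have e1 : a0 i - a0 j - (a0 i - b j) = b j - a0 j.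
    by rewrite opprB addrC addrA subrK.
  have e2 : b i - b j - (a0 i - b j) = b i - a0 i.
    by rewrite opprB addrA subrK.
  rewrite e1 in h1; rewrite e2 in h2.
  have k0 := kap_ge0 s0.
  have h3 := ler_wpM2l k0 (pb j).
  have h4 := ler_wpM2l k0 (pb i).
  have -> : rbf sigma (a0 i) (a0 j) + rbf sigma (b i) (b j) - 2 * rbf sigma (a0 i) (b j)
     = (rbf sigma (a0 i) (a0 j) - rbf sigma (a0 i) (b j)) +
       (rbf sigma (b i) (b j) - rbf sigma (a0 i) (b j)).
    by move: (rbf sigma (a0 i) (a0 j)) (rbf sigma (b i) (b j)) (rbf sigma (a0 i) (b j)) => x y z; ring.
  have l1 := ler_norm (rbf sigma (a0 i) (a0 j) - rbf sigma (a0 i) (b j)).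
  have l2 := ler_norm (rbf sigma (b i) (b j) - rbf sigma (a0 i) (b j)).
  rewrite /B.
  have := lerD (le_trans l1 (le_trans h1 h3)) (le_trans l2 (le_trans h2 h4)).
  have -> : 2 * (kap sigma * (eps * L%:R * M)) =
     kap sigma * (eps * L%:R * M) + kap sigma * (eps * L%:R * M).
    by move: (kap sigma * (eps * L%:R * M)) => x; ring.
  exact.
have Np : 0 < N%:R :> R by rewrite ltr0n.
have -> : 2 * eps * L%:R / (sigma * Num.sqrt (expR 1)) *
    (c / alpha + 1 / (sigma * Num.sqrt (expR 1))) = B.
  rewrite /B /M /kap.
  by move: (Num.sqrt (expR 1)) (L%:R : R) => q l; ring.
rewrite /MMD2 ler_pdivrMl ?exprn_gt0 //.
have -> : N%:R ^+ 2 * B = \sum_(i < N) \sum_(j < N) B.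
  by rewrite !sumr_const !card_ord -mulrnA -[B *+ _]mulr_natl natrM expr2.
by apply: ler_sum => i _; apply: ler_sum => j _; exact: T.
Qed.
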